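(* Let $d\ge 1$ and let $(D,\mathbf{m},E)\in\mathbb{R}\times\mathbb{R}^d\times\mathbb{R}$ satisfy $D>0$ and $E-\sqrt{D^2+|\mathbf{m}|^2}>0$ (in particular $E>|\mathbf{m}|$). For $h>1$ define \[ T(h)=\frac{3h-8}{24}+\frac{\sqrt{(3h+8)^2-96}}{24}, \] and for $\Pi\ge E$ define \[ h(\Pi)=\frac{\sqrt{\Pi^2-|\mathbf{m}|^2}}{D},\qquad S(\Pi)=\Pi^2-\Pi E-D^2\,h(\Pi)\,T\big(h(\Pi)\big). \] Then $S$ has exactly one real root in the open interval $(E,\infty)$.
   Context: This arises for the relativistic hydrodynamics equations closed by the equation of state $h=\frac{2(6p^2+4p\rho+\rho^2)}{\rho(3p+2\rho)}$ (RC-EOS), relating specific enthalpy $h$, pressure $p$ and rest-mass density $\rho$; solving this for $p>0$ gives $p=\rho\,T(h)$. Here $D$ is the relativistic density, $\mathbf{m}$ the momentum density, $E$ the energy density, and $\Pi=E+p$. For $\Pi\ge E$ one has $h(\Pi)>1$, so $S$ is well defined there. *)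

(* Defs.v *)
From Stdlib Require Import Reals List.
Open Scope R_scope.

(* A vector of R^d is represented as a list of reals of length d. *)
Definition norm2 (m : list R) : R := fold_right (fun x acc => x ^ 2 + acc) 0 m.
Definition vnorm (m : list R) : R := sqrt (norm2 m).

Definition Tfun (h : R) : R := (3 * h - 8) / 24 + sqrt ((3 * h + 8) ^ 2 - 96) / 24.

Definition hfun (D : R) (m : list R) (Pi : R) : R := sqrt (Pi ^ 2 - vnorm m ^ 2) / D.

Definition Sfun (D : R) (m : list R) (E Pi : R) : R :=
  Pi ^ 2 - Pi * E - D ^ 2 * hfun D m Pi * Tfun (hfun D m Pi).

(* Main.v *)
Require Import Defs.
From Stdlib Require Import Reals List Lra Psatz Ranalysis5.
From Coquelicot Require Import Coquelicot.
Open Scope R_scope.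
Lemma s_facts h : 1 <= h -> let s := sqrt ((3*h+8)^2 - 96) in
  s ^ 2 = (3*h+8)^2 - 96 /\ 5 <= s.
Proof.
intros H s. assert (H0 : 25 <= (3*h+8)^2 - 96) by nra.
split. unfold s. rewrite pow2_sqrt; lra.
replace 5 with (sqrt 25). apply sqrt_le_1_alt; lra.
replace 25 with (5*5) by lra. rewrite sqrt_square; lra.
Qed.

Lemma T_mono x y : 1 <= x -> x <= y ->
  y * Tfun y - y^2/4 <= x * Tfun x - x^2/4.
Proof.
intros Hx Hxy. unfold Tfun.
destruct (s_facts x Hx) as [Sx Hsx]. destruct (s_facts y ltac:(lra)) as [Sy Hsy].
set (sx := sqrt ((3*x+8)^2 - 96)) in *. set (sy := sqrt ((3*y+8)^2 - 96)) in *.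
assert (prod : (x*sy - y*sx)*(x*sy + y*sx) = (y-x)*(32*(x+y) - 48*x*y)).
{ replace ((x*sy - y*sx)*(x*sy + y*sx)) with (x^2*sy^2 - y^2*sx^2) by ring.
  rewrite Sx, Sy. ring. }
assert (key : x*sy - y*sx <= 8*(y-x)).
{ destruct (Rle_dec (x*sy - y*sx) 0). nra.
  assert (HB : 5*(x+y) <= x*sy + y*sx) by nra.
  assert (HK : (32*(x+y) - 48*x*y) <= 8*(x*sy + y*sx)) by nra.
  assert ((x*sy - y*sx)*(x*sy + y*sx) <= 8*(y-x)*(x*sy + y*sx)) by nra.
  apply (Rmult_le_reg_r (x*sy + y*sx)); nra. }
assert (Ey : (sy - 3*y - 8)*(sy+3*y+8) = -96) by nra.
assert (Ex : (sx - 3*x - 8)*(sx+3*x+8) = -96) by nra.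
assert (G : y*(sy - 3*y - 8) <= x*(sx - 3*x - 8)).
{ assert (Hu : 0 < sy+3*y+8) by lra. assert (Hv : 0 < sx+3*x+8) by lra.
  apply (Rmult_le_reg_r ((sy+3*y+8)*(sx+3*x+8))). nra.
  replace (y * (sy - 3 * y - 8) * ((sy + 3 * y + 8) * (sx + 3 * x + 8))) with (-96*y*(sx+3*x+8)) by (rewrite <- Ey; ring).
  replace (x * (sx - 3 * x - 8) * ((sy + 3 * y + 8) * (sx + 3 * x + 8))) with (-96*x*(sy+3*y+8)) by (rewrite <- Ex; ring).
  nra. }
lra.
Qed.

Lemma T_bounds h : 1 < h -> 0 < Tfun h /\ Tfun h <= h/4.
Proof.
intros H. destruct (s_facts h ltac:(lra)) as [S Hs]. unfold Tfun.
set (s := sqrt ((3*h+8)^2 - 96)) in *. split.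
- assert (8 - 3*h < s). { destruct (Rle_dec (8-3*h) 0). lra. nra. } lra.
- assert (s <= 3*h+8) by nra. lra.
Qed.

Lemma h_facts D X : 0 < D -> D^2 < X -> 1 < sqrt X / D /\ D^2*(sqrt X / D)^2 = X.
Proof.
intros HD HX. split.
- apply (Rmult_lt_reg_r D); [lra|]. unfold Rdiv. rewrite Rmult_assoc, Rinv_l by lra.
  rewrite Rmult_1_l, Rmult_1_r. rewrite <- (sqrt_pow2 D) by lra. apply sqrt_lt_1_alt; nra.
- unfold Rdiv. rewrite Rpow_mult_distr, pow2_sqrt by nra. field. lra.
Qed.

Lemma Scont D m E a : 0 < D -> D^2 < a^2 - vnorm m ^2 -> continuity_pt (Sfun D m E) a.
Proof.
intros HD Ha.
assert (H : ex_derive (Sfun D m E) a).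
{ unfold Sfun, hfun, Tfun. destruct (h_facts D _ HD Ha) as [H1 _].
  auto_derive. replace (a * (a * 1) + - (vnorm m * (vnorm m * 1))) with (a^2 - vnorm m^2) by ring.
  unfold Rdiv in H1. repeat split; try nra. }
apply continuity_pt_filterlim. exact (ex_derive_continuous _ _ H).
Qed.

Lemma S_strict D m E a b : 0 < D -> 0 < E -> D^2 < E^2 - vnorm m^2 -> E < a -> a < b ->
  Sfun D m E a < Sfun D m E b.
Proof.
intros HD HE HEM Ha Hab. unfold Sfun, hfun.
destruct (h_facts D (a^2 - vnorm m^2) HD ltac:(nra)) as [ha Ha2].
destruct (h_facts D (b^2 - vnorm m^2) HD ltac:(nra)) as [hb Hb2].
set (x := sqrt (a ^ 2 - vnorm m ^ 2) / D) in *.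
set (y := sqrt (b ^ 2 - vnorm m ^ 2) / D) in *.
assert (Hxy : x <= y).
{ unfold x, y, Rdiv. apply Rmult_le_compat_r. left; apply Rinv_0_lt_compat; lra.
  apply sqrt_le_1_alt; nra. }
pose proof (T_mono x y ltac:(lra) Hxy) as Tm.
assert (D^2 * (y * Tfun y) <= D^2 * (x * Tfun x) + (D^2*y^2 - D^2*x^2)/4).
{ assert (0 < D^2) by nra. nra. }
rewrite Ha2, Hb2 in H. nra.
Qed.

Theorem lemma1 (d : nat) (D : R) (m : list R) (E : R) :
  (1 <= d)%nat -> length m = d ->
  0 < D -> E - sqrt (D ^ 2 + vnorm m ^ 2) > 0 ->
  exists! Pi : R, E < Pi /\ Sfun D m E Pi = 0.
Proof.
intros _ _ HD HE.
assert (HM : 0 <= vnorm m ^ 2) by nra.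
assert (Hs : 0 <= sqrt (D ^ 2 + vnorm m ^ 2)) by apply sqrt_pos.
assert (Hs2 : sqrt (D ^ 2 + vnorm m ^ 2) ^ 2 = D ^ 2 + vnorm m ^ 2) by (apply pow2_sqrt; nra).
assert (E0 : 0 < E) by lra.
assert (EM : D^2 < E^2 - vnorm m^2) by nra.
assert (SE : Sfun D m E E < 0).
{ unfold Sfun, hfun. destruct (h_facts D _ HD EM) as [h1 _].
  destruct (T_bounds _ h1) as [T1 _].
  assert (0 < D^2) by nra.
  assert (0 < D ^ 2 * (sqrt (E ^ 2 - vnorm m ^ 2) / D)) by (apply Rmult_lt_0_compat; lra).
  assert (0 < D ^ 2 * (sqrt (E ^ 2 - vnorm m ^ 2) / D) * Tfun (sqrt (E ^ 2 - vnorm m ^ 2) / D))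
    by (apply Rmult_lt_0_compat; lra).
  lra. }
assert (S2E : 0 < Sfun D m E (2*E)).
{ unfold Sfun, hfun. destruct (h_facts D ((2*E)^2 - vnorm m^2) HD ltac:(nra)) as [h1 h2].
  set (h := sqrt ((2*E) ^ 2 - vnorm m ^ 2) / D) in *.
  destruct (T_bounds _ h1) as [T1 T2].
  assert (0 < D^2) by nra.
  assert (D^2 * h * Tfun h <= D^2 * h * (h/4)).
  { apply Rmult_le_compat_l; [nra|lra]. }
  nra. }
destruct (IVT_interv (Sfun D m E) E (2*E)) as [z [Hz1 Hz2]].
- intros a Ha. apply Scont; [lra| nra].
- lra.
- exact SE.
- exact S2E.
- exists z. assert (Ez : E <> z) by (intro; subst; lra).
  split. split; [lra|exact Hz2].
  intros w [Hw1 Hw2].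
  destruct (Rtotal_order z w) as [H|[H|H]]; auto.
  + pose proof (S_strict D m E z w HD E0 EM ltac:(lra) H). lra.
  + pose proof (S_strict D m E w z HD E0 EM Hw1 H). lra.
Qed.
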